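(* Let $p$ be a positive integer, $L,E,\sigma>0$ with $L,E\in 2^{-p}\mathbb{Z}$, and $\epsilon>0$ with $\sigma\ge L/\epsilon$. Then the truncated cumulative Laplace mechanism $\mathcal{M}^{(\mathtt{CLap})}_{L,E,\sigma,p}:\mathcal{A}_{p,E}\to\mathcal{B}_{p,L+E}$ is $\epsilon$-differentially private in the sense that for all $x_1,x_2\in\mathcal{A}_{p,E}$ and all $y\in\mathcal{B}_{p,L+E}$, $f^{(\mathtt{CLap})}_{x_1,\sigma}(y)\le e^{\epsilon}f^{(\mathtt{CLap})}_{x_2,\sigma}(y)$.
   Context: For $p\in\mathbb{Z}_{>0}$ and $B>0$, $2^{-p}\mathbb{Z}=\{a/2^p: a\in\mathbb{Z}\}$, $\mathcal{A}_{p,B}:=[-B,B]\cap 2^{-p}\mathbb{Z}$ and $\mathcal{B}_{p,B}:=\mathcal{A}_{p,B}\setminus\{B\}$. The truncated cumulative Laplace mechanism $\mathcal{M}^{(\mathtt{CLap})}_{L,E,\sigma,p}$ with parameters $L,E,\sigma>0$ maps $x\in\mathcal{A}_{p,E}$ to $y\in\mathcal{B}_{p,L+E}$ with probability $f^{(\mathtt{CLap})}_{x,\sigma}(y)=\frac{1}{\lambda^{(\mathtt{CLap})}_{L,E,\sigma}}\int_y^{y+2^{-p}}e^{-\min(|r-x|,L)/\sigma}dr$, where $\lambda^{(\mathtt{CLap})}_{L,E,\sigma}=\sum_{y\in\mathcal{B}_{p,L+E}}\int_y^{y+2^{-p}}e^{-\min(|r-x|,L)/\sigma}dr$ is the normalizing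 constant (independent of $x$). *)

(* Defs.v *)
From Stdlib Require Import Reals Lra Lia ZArith List.
From Coquelicot Require Import Coquelicot.
Open Scope R_scope.

Definition mesh (p : nat) : R := / (2 ^ p).

Definition in_grid (p : nat) (y : R) : Prop :=
  exists a : Z, y = IZR a * mesh p.

Definition in_A (p : nat) (B y : R) : Prop :=
  in_grid p y /\ -B <= y <= B.

Definition in_B (p : nat) (B y : R) : Prop :=
  in_A p B y /\ y <> B.

Definition in_Bb (p : nat) (B : R) (a : Z) : bool :=
  let y := IZR a * mesh p in
  if Rle_dec (- B) y then
    if Rle_dec y B then
      if Req_EM_T y B then false else true
    else false
  else false.

(* A finite range of integers containing every a with a*2^{-p} in [-B,B]
   (when B > 0): all a with |a| <= M, M = |up(B * 2^p)|. *)
Definition grid_range (p : nat) (B : R) : list Z :=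
  let M := Z.abs (up (B * 2 ^ p)) in
  map (fun n : nat => (Z.of_nat n - M)%Z) (seq 0 (Z.to_nat (2 * M + 1))).

Definition clap_kernel (L sigma x r : R) : R :=
  exp (- Rmin (Rabs (r - x)) L / sigma).

Definition cell_mass (p : nat) (L sigma x y : R) : R :=
  RInt (clap_kernel L sigma x) y (y + mesh p).

Definition lambda_clap (p : nat) (L E sigma x : R) : R :=
  fold_right Rplus 0
    (map (fun a : Z => cell_mass p L sigma x (IZR a * mesh p))
         (filter (in_Bb p (L + E)) (grid_range p (L + E)))).

Definition f_clap (p : nat) (L E sigma x y : R) : R :=
  cell_mass p L sigma x y / lambda_clap p L E sigma x.

(* Main.v *)
Require Import Defs.
From Stdlib Require Import Reals.
From Coquelicot Require Import Coquelicot.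
From Stdlib Require Import Lra Lia ZArith List.
Open Scope R_scope.

Lemma exp_le' a b : a <= b -> exp a <= exp b.
Proof.
  intros H. destruct (Req_dec a b) as [->|Hn]; [lra|].
  left; apply exp_increasing; lra.
Qed.

Lemma kernel_cont L s x z : continuous (clap_kernel L s x) z.
Proof.
  apply continuity_pt_filterlim. unfold clap_kernel.
  apply continuity_pt_ext with
    (fun r => exp (- ((Rabs (r - x) + L - Rabs (Rabs (r - x) - L)) / 2) / s)).
  { intros r. f_equal. f_equal. f_equal. unfold Rmin.
    destruct (Rle_dec (Rabs (r - x)) L).
    - rewrite (Rabs_left1 (Rabs (r - x) - L)); lra.
    - rewrite (Rabs_right (Rabs (r - x) - L)); lra. }
  apply continuity_pt_comp with (f2 := exp).
  - unfold Rdiv. apply continuity_pt_mult; [|apply continuity_pt_const; intros ? ?; reflexivity].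
    apply continuity_pt_opp. apply continuity_pt_mult;
      [|apply continuity_pt_const; intros ? ?; reflexivity].
    apply continuity_pt_minus; [apply continuity_pt_plus|].
    + apply continuity_pt_comp with (f2 := Rabs); [|apply Rcontinuity_abs].
      apply continuity_pt_minus; [apply derivable_continuous_pt, derivable_pt_id|
        apply continuity_pt_const; intros ? ?; reflexivity].
    + apply continuity_pt_const; intros ? ?; reflexivity.
    + apply continuity_pt_comp with (f2 := Rabs); [|apply Rcontinuity_abs].
      apply continuity_pt_minus; [|apply continuity_pt_const; intros ? ?; reflexivity].
      apply continuity_pt_comp with (f2 := Rabs); [|apply Rcontinuity_abs].
      apply continuity_pt_minus; [apply derivable_continuous_pt, derivable_pt_id|
        apply continuity_pt_const; intros ? ?; reflexivity].
  - apply derivable_continuous_pt, derivable_pt_exp.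
Qed.

Lemma kex L s x a b : ex_RInt (clap_kernel L s x) a b.
Proof. apply (@ex_RInt_continuous R_CompleteNormedModule); intros; apply kernel_cont. Qed.

Lemma chas L s x a b c :
  RInt (clap_kernel L s x) a b + RInt (clap_kernel L s x) b c =
  RInt (clap_kernel L s x) a c.
Proof. exact (RInt_Chasles _ a b c (kex L s x a b) (kex L s x b c)). Qed.

Lemma rint_const a b c : RInt (fun _ => c) a b = (b - a) * c.
Proof. rewrite RInt_const. reflexivity. Qed.

Lemma kernel_bounds L s x r : 0 < L -> 0 < s ->
  exp (- L / s) <= clap_kernel L s x r <= 1.
Proof.
  intros HL Hs. unfold clap_kernel.
  assert (H0 : 0 <= Rmin (Rabs (r - x)) L).
  { apply Rmin_glb; [apply Rabs_pos|lra]. }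
  assert (H1 : Rmin (Rabs (r - x)) L <= L) by apply Rmin_r.
  split.
  - apply exp_le'. unfold Rdiv. apply Rmult_le_compat_r.
    + left; apply Rinv_0_lt_compat; lra.
    + lra.
  - rewrite <- exp_0. apply exp_le'. unfold Rdiv.
    rewrite Ropp_mult_distr_l_reverse.
    assert (0 <= Rmin (Rabs (r - x)) L * / s).
    { apply Rmult_le_pos; [lra|left; apply Rinv_0_lt_compat; lra]. }
    lra.
Qed.

Lemma filter_all {A} (P : A -> bool) l :
  (forall x, In x l -> P x = true) -> filter P l = l.
Proof.
  induction l as [|a l IH]; intros H; simpl; auto.
  rewrite H by (left; auto). rewrite IH; auto. intros; apply H; right; auto.
Qed.

Lemma filter_none {A} (P : A -> bool) l :
  (forall x, In x l -> P x = false) -> filter P l = nil.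
Proof.
  induction l as [|a l IH]; intros H; simpl; auto.
  rewrite H by (left; auto). apply IH. intros; apply H; right; auto.
Qed.

Lemma in_Bb_true p N a : (- N <= a < N)%Z -> in_Bb p (IZR N * mesh p) a = true.
Proof.
  intros [H1 H2].
  assert (Hm : 0 < mesh p) by (unfold mesh; apply Rinv_0_lt_compat, pow_lt; lra).
  apply IZR_le in H1. apply IZR_lt in H2. rewrite opp_IZR in H1.
  assert (A1 : - (IZR N * mesh p) <= IZR a * mesh p) by nra.
  assert (A2 : IZR a * mesh p < IZR N * mesh p) by nra.
  unfold in_Bb. destruct Rle_dec; [|lra]. destruct Rle_dec; [|lra].
  destruct Req_EM_T; [lra|reflexivity].
Qed.

Lemma in_Bb_false p N a : (a < - N \/ N <= a)%Z -> in_Bb p (IZR N * mesh p) a = false.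
Proof.
  intros H.
  assert (Hm : 0 < mesh p) by (unfold mesh; apply Rinv_0_lt_compat, pow_lt; lra).
  unfold in_Bb. destruct H as [H|H].
  - apply IZR_lt in H. rewrite opp_IZR in H.
    assert (A1 : IZR a * mesh p < - (IZR N * mesh p)) by nra.
    destruct Rle_dec; [lra|reflexivity].
  - apply IZR_le in H.
    assert (A1 : IZR N * mesh p <= IZR a * mesh p) by nra.
    destruct Rle_dec; [|reflexivity]. destruct Rle_dec; [|reflexivity].
    destruct Req_EM_T; [reflexivity|lra].
Qed.

Lemma telescope L s x p M start len :
  fold_right Rplus 0
    (map (fun n : nat => cell_mass p L s x (IZR (Z.of_nat n - M) * mesh p))
       (seq start len)) =
  RInt (clap_kernel L s x) (IZR (Z.of_nat start - M) * mesh p)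
    (IZR (Z.of_nat (start + len) - M) * mesh p).
Proof.
  revert start. induction len as [|len IH]; intros start.
  - simpl. rewrite Nat.add_0_r, RInt_point. reflexivity.
  - simpl. rewrite IH. unfold cell_mass.
    replace (IZR (Z.of_nat (S start) - M) * mesh p) with
      (IZR (Z.of_nat start - M) * mesh p + mesh p).
    2:{ rewrite !minus_IZR, <- !INR_IZR_INZ, S_INR. ring. }
    rewrite chas. f_equal. f_equal. f_equal. f_equal. f_equal. lia.
Qed.

Lemma lambda_eq p L E s x N :
  L + E = IZR N * mesh p -> (0 < N)%Z ->
  lambda_clap p L E s x = RInt (clap_kernel L s x) (- (L + E)) (L + E).
Proof.
  intros HB HN. unfold lambda_clap, grid_range. rewrite HB.
  assert (Hup : up (IZR N * mesh p * 2 ^ p) = (N + 1)%Z).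
  { replace (IZR N * mesh p * 2 ^ p) with (IZR N).
    2:{ unfold mesh. field. apply pow_nonzero; lra. }
    symmetry; apply up_tech; [lra|apply IZR_lt; lia]. }
  rewrite Hup. replace (Z.abs (N + 1)) with (N + 1)%Z by lia.
  set (n0 := Z.to_nat N).
  replace (Z.to_nat (2 * (N + 1) + 1)) with (1 + (2 * n0 + 2))%nat by (unfold n0; lia).
  rewrite seq_app, seq_app, !map_app, !filter_app.
  rewrite (filter_none _ (map _ (seq 0 1))).
  2:{ intros a Ha. apply in_map_iff in Ha. destruct Ha as [n [<- Hn]].
      apply in_seq in Hn. apply in_Bb_false. lia. }
  rewrite (filter_none _ (map _ (seq (0 + 1 + 2 * n0) 2))).
  2:{ intros a Ha. apply in_map_iff in Ha. destruct Ha as [n [<- Hn]].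
      apply in_seq in Hn. apply in_Bb_false. unfold n0 in Hn. lia. }
  rewrite filter_all.
  2:{ intros a Ha. apply in_map_iff in Ha. destruct Ha as [n [<- Hn]].
      apply in_seq in Hn. apply in_Bb_true. unfold n0 in Hn. lia. }
  simpl app. rewrite app_nil_r, map_map.
  rewrite telescope. f_equal.
  - replace (Z.of_nat 1 - (N + 1))%Z with (- N)%Z by lia. rewrite opp_IZR. ring.
  - f_equal. f_equal. unfold n0. lia.
Qed.

Lemma lambda_formula L E s x : 0 < L -> 0 < E -> 0 < s -> -E <= x <= E ->
  RInt (clap_kernel L s x) (- (L + E)) (L + E) =
  exp (- L / s) * (2 * E) + RInt (clap_kernel L s 0) (- L) L.
Proof.
  intros HL HE Hs Hx.
  rewrite <- (chas L s x _ (x - L)), <- (chas L s x (x - L) (x + L)).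
  assert (Hc1 : RInt (clap_kernel L s x) (- (L + E)) (x - L) =
                (x - L - - (L + E)) * exp (- L / s)).
  { rewrite <- rint_const. apply RInt_ext. intros r.
    rewrite Rmin_left, Rmax_right by lra. intros Hr.
    unfold clap_kernel. rewrite Rmin_right; [reflexivity|].
    rewrite Rabs_left; lra. }
  assert (Hc2 : RInt (clap_kernel L s x) (x + L) (L + E) =
                (L + E - (x + L)) * exp (- L / s)).
  { rewrite <- rint_const. apply RInt_ext. intros r.
    rewrite Rmin_left, Rmax_right by lra. intros Hr.
    unfold clap_kernel. rewrite Rmin_right; [reflexivity|].
    rewrite Rabs_right; lra. }
  assert (Hm : RInt (clap_kernel L s x) (x - L) (x + L) =
               RInt (clap_kernel L s 0) (- L) L).
  { transitivity (RInt (fun y => scal 1 (clap_kernel L s 0 (1 * y + - x))) (x - L) (x + L)).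
    { apply RInt_ext. intros r _. unfold scal; simpl; unfold mult; simpl; rewrite Rmult_1_l. unfold clap_kernel.
      f_equal. f_equal. f_equal. f_equal. f_equal. ring. }
    transitivity (RInt (clap_kernel L s 0) (1 * (x - L) + - x) (1 * (x + L) + - x)).
    { exact (RInt_comp_lin (V:=R_CompleteNormedModule) (clap_kernel L s 0) 1 (- x) (x - L) (x + L) (kex _ _ _ _ _)). }
    f_equal; ring. }
  rewrite Hc1, Hc2, Hm. generalize (RInt (clap_kernel L s 0) (- L) L). intros J. match goal with |- ?a = ?b => change (@eq R a b) end. ring.
Qed.

Theorem mainTheorem9 (p : nat) (L E sigma eps : R) :
  (0 < p)%nat ->
  0 < L -> 0 < E -> 0 < sigma ->
  in_grid p L -> in_grid p E ->
  0 < eps -> sigma >= L / eps ->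
  forall x1 x2 y : R,
    in_A p E x1 -> in_A p E x2 -> in_B p (L + E) y ->
    f_clap p L E sigma x1 y <= exp eps * f_clap p L E sigma x2 y.
Proof.
  intros Hp HL HE Hs [a Ha] [b Hb] Heps Hse x1 x2 y [_ Hx1] [_ Hx2] _.
  assert (Hm : 0 < mesh p) by (unfold mesh; apply Rinv_0_lt_compat, pow_lt; lra).
  assert (HB : L + E = IZR (a + b) * mesh p) by (rewrite plus_IZR; lra).
  assert (HN : (0 < a + b)%Z).
  { apply lt_IZR. apply Rmult_lt_reg_r with (mesh p); lra. }
  assert (Hl1 := lambda_eq p L E sigma x1 _ HB HN).
  assert (Hl2 := lambda_eq p L E sigma x2 _ HB HN).
  rewrite lambda_formula in Hl1, Hl2 by lra.
  set (c := exp (- L / sigma)) in *.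
  assert (Hc : 0 < c) by apply exp_pos.
  set (I := RInt (clap_kernel L sigma 0) (- L) L) in *.
  assert (HI : c * (L - - L) <= I).
  { unfold I. rewrite Rmult_comm, <- rint_const. apply RInt_le; [lra| |apply kex|].
    - apply ex_RInt_const.
    - intros; apply kernel_bounds; lra. }
  set (Lam := c * (2 * E) + I) in *.
  assert (HLam : 0 < Lam) by (unfold Lam; nra).
  unfold f_clap. rewrite Hl1, Hl2.
  assert (Hc1 : cell_mass p L sigma x1 y <= mesh p).
  { unfold cell_mass. replace (mesh p) with ((y + mesh p - y) * 1) at 2 by ring.
    rewrite <- rint_const. apply RInt_le; [lra|apply kex|apply ex_RInt_const|].
    intros; apply kernel_bounds; lra. }
  assert (Hc2 : c * mesh p <= cell_mass p L sigma x2 y).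
  { unfold cell_mass. replace (c * mesh p) with ((y + mesh p - y) * c) by ring.
    rewrite <- rint_const. apply RInt_le; [lra|apply ex_RInt_const|apply kex|].
    intros; apply kernel_bounds; lra. }
  assert (Hls : L / sigma <= eps).
  { apply Rmult_le_reg_r with sigma; [lra|].
    unfold Rdiv. rewrite Rmult_assoc, Rinv_l by lra.
    assert (L / eps * eps <= sigma * eps) by (apply Rmult_le_compat_r; lra).
    unfold Rdiv in H. rewrite Rmult_assoc, Rinv_l in H by lra. lra. }
  assert (Hec : 1 <= exp eps * c).
  { unfold c. rewrite <- exp_plus, <- exp_0. apply exp_le'.
    unfold Rdiv in *. lra. }
  unfold Rdiv. rewrite <- Rmult_assoc.
  apply Rmult_le_compat_r; [left; apply Rinv_0_lt_compat; lra|].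
  assert (0 <= exp eps) by (left; apply exp_pos).
  assert (exp eps * (c * mesh p) <= exp eps * cell_mass p L sigma x2 y)
    by (apply Rmult_le_compat_l; lra).
  nra.
Qed.
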